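(* Let $X_1=U_1\Sigma_1V_1^T$, $X_2=U_2\Sigma_2V_2^T$ and $(X_1~X_2)=U\Sigma V^T$ be (compact) SVDs, where $X_1,X_2$ have the same number of rows. Assume the nonzero singular values of $X_1$, of $X_2$, and of $(X_1~X_2)$ are each distinct. Suppose $U_1$ and $U_2$ may share some identical columns, and that every column of $U_1$ not appearing in $U_2$ is orthogonal to every column of $U_2$ not appearing in $U_1$. Then every column of $U_1$ and every column of $U_2$ is (up to sign) a column of $U$. *)

(* Defs.v *)
From HB Require Import structures.
From mathcomp Require Import all_boot all_order all_algebra.
From mathcomp Require Import reals.
Set Implicit Arguments. Unset Strict Implicit. Unset Printing Implicit Defensive.
Import Order.TTheory GRing.Theory Num.Theory.
Local Open Scope ring_scope.

Definition is_compact_svd (R : realType) (m n r : nat) (X : 'M[R]_(m, n))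
  (U : 'M[R]_(m, r)) (s : 'rV[R]_r) (V : 'M[R]_(n, r)) : Prop :=
  [/\ U^T *m U = 1%:M, V^T *m V = 1%:M,
      (forall i : 'I_r, 0 < s 0 i),
      (forall i j : 'I_r, (i <= j)%N -> s 0 j <= s 0 i)
    & X = U *m diag_mx s *m V^T].

Definition distinct_sv (R : realType) (r : nat) (s : 'rV[R]_r) : Prop :=
  injective (fun i : 'I_r => s 0 i).

Definition is_column_of (R : realType) (m r : nat) (v : 'cV[R]_m)
  (U : 'M[R]_(m, r)) : Prop := exists k : 'I_r, v = col k U.

Definition is_column_of_up_to_sign (R : realType) (m r : nat) (v : 'cV[R]_m)
  (U : 'M[R]_(m, r)) : Prop :=
  exists k : 'I_r, v = col k U \/ v = - col k U.

(* Main.v *)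
From Stdlib Require Import Classical.
Require Import Defs.
From HB Require Import structures.
From mathcomp Require Import all_boot all_order all_algebra.
From mathcomp Require Import reals.
Import Order.TTheory GRing.Theory Num.Theory.
Local Open Scope ring_scope.


Set Implicit Arguments.
Lemma key (R : realType) (m r : nat) (U : 'M[R]_(m, r)) (s : 'rV[R]_r) (u : 'cV[R]_m) (lam : R) :
  U^T *m U = 1%:M -> (forall i, 0 < s 0 i) -> injective (fun i => s 0 i) ->
  u^T *m u = 1%:M -> 0 < lam ->
  U *m (diag_mx s *m diag_mx s) *m U^T *m u = lam *: u ->
  exists k, u = col k U \/ u = - col k U.
Proof.
move=> UU spos sinj uu lam0 Hu.
set D := diag_mx s *m diag_mx s in Hu.
set a := U^T *m u.
have h1 : D *m a = lam *: a.
  by rewrite /a scalemxAr -Hu !mulmxA UU mul1mx.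
have h2 : u = U *m a.
  have lamn0 : lam != 0 by rewrite gt_eqF.
  transitivity (lam^-1 *: (lam *: u)); first by rewrite scalerK.
  by rewrite -Hu -(mulmxA _ U^T) -(mulmxA U) -/a h1 -scalemxAr scalerK.
clearbody a.
have h3 : a^T *m a = 1%:M.
  by rewrite -uu h2 trmx_mul mulmxA -(mulmxA a^T) UU mulmx1.
have hent : forall i, s 0 i * (s 0 i * a i 0) = lam * a i 0.
  move=> i; move/matrixP: h1 => /(_ i 0).
  by rewrite /D -mulmxA !mul_diag_mx !mxE.
have uniq : forall i j, a i 0 != 0 -> a j 0 != 0 -> i = j.
  move=> i j ai aj; apply: sinj => /=.
  have ei : s 0 i ^+ 2 = lam by apply: (mulIf ai); rewrite expr2 -mulrA hent.
  have ej : s 0 j ^+ 2 = lam by apply: (mulIf aj); rewrite expr2 -mulrA hent.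
  by apply/eqP; rewrite -(@eqrXn2 _ 2) ?ltW ?spos // ei ej.
have [k ak] : exists k, a k 0 != 0.
  case: (boolP [exists k, a k 0 != 0]) => [/existsP//|/existsPn H].
  have a0 : a = 0.
    apply/matrixP => p q; rewrite (ord1 q) mxE; apply/eqP.
    by have := H p; rewrite negbK.
  move: h3; rewrite a0 trmx0 mul0mx => /matrixP /(_ 0 0).
  by rewrite !mxE /= => /eqP; rewrite eq_sym oner_eq0.
have ha : a = a k 0 *: delta_mx k 0.
  apply/matrixP => p q; rewrite (ord1 q) !mxE.
  case: (eqVneq p k) => [->|ne]; first by rewrite eqxx mulr1.
  rewrite mulr0; case: (eqVneq (a p 0) 0) => // ai.
  by rewrite (uniq _ _ ai ak) eqxx in ne.
have c2 : a k 0 ^+ 2 = 1.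
  move/matrixP: h3 => /(_ 0 0); rewrite !mxE (bigD1 k) //= big1 ?addr0.
    by rewrite mxE expr2.
  move=> p ne; rewrite mxE; case: (eqVneq (a p 0) 0) => [->|ai]; first by rewrite mulr0.
  by rewrite (uniq _ _ ai ak) eqxx in ne.
move/eqP: c2; rewrite sqrf_eq1 => /orP [] /eqP ck; exists k; [left|right];
  rewrite h2 ha -scalemxAr -colE ck ?scale1r ?scaleN1r //.
Qed.

Lemma diag_delta (R : realType) (r : nat) (s : 'rV[R]_r) (i : 'I_r) :
  diag_mx s *m delta_mx i (0 : 'I_1) = s 0 i *: delta_mx i 0.
Proof.
apply/matrixP => p q; rewrite mul_diag_mx !mxE.
case: (eqVneq p i) => [->|ne]; first by [].
by rewrite /= !mulr0.
Qed.

Lemma col_norm (R : realType) (m r : nat) (U : 'M[R]_(m, r)) (i : 'I_r) :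
  U^T *m U = 1%:M -> U^T *m col i U = delta_mx i 0.
Proof. by move=> UU; rewrite colE mulmxA UU mul1mx. Qed.

Lemma col_unit (R : realType) (m r : nat) (U : 'M[R]_(m, r)) (i : 'I_r) :
  U^T *m U = 1%:M -> (col i U)^T *m col i U = 1%:M.
Proof.
move=> UU; rewrite tr_col -row_mul col_norm //.
by apply/matrixP => x y; rewrite (ord1 x) (ord1 y) !mxE eqxx.
Qed.

Lemma XXt (R : realType) (m n r : nat) (X : 'M[R]_(m, n)) (U : 'M[R]_(m, r)) (s : 'rV[R]_r)
  (V : 'M[R]_(n, r)) :
  X = U *m diag_mx s *m V^T -> V^T *m V = 1%:M ->
  X *m X^T = U *m (diag_mx s *m diag_mx s) *m U^T.
Proof.
move=> -> VV; rewrite !trmx_mul trmxK tr_diag_mx.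
by rewrite (mulmxA (U *m diag_mx s *m V^T) V) -(mulmxA _ V^T V) VV mulmx1 !mulmxA.
Qed.

Lemma eig_own (R : realType) (m r : nat) (A : 'M[R]_(m, r)) (s : 'rV[R]_r) (i : 'I_r) :
  A^T *m A = 1%:M ->
  A *m (diag_mx s *m diag_mx s) *m A^T *m col i A = (s 0 i ^+ 2) *: col i A.
Proof.
move=> AA; rewrite -mulmxA col_norm // -!mulmxA diag_delta -scalemxAr diag_delta.
by rewrite scalerA -scalemxAr -colE expr2.
Qed.

Lemma side (R : realType) (m ra rb : nat) (A : 'M[R]_(m, ra)) (sa : 'rV[R]_ra)
  (B : 'M[R]_(m, rb)) (sb : 'rV[R]_rb) :
  A^T *m A = 1%:M -> B^T *m B = 1%:M ->
  (forall i, 0 < sa 0 i) -> (forall i, 0 < sb 0 i) ->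
  (forall (i : 'I_ra) (j : 'I_rb),
      ~ (exists k, col i A = col k B) ->
      ~ (exists k, col j B = col k A) ->
      (col i A)^T *m col j B = 0) ->
  forall i, exists lam, 0 < lam /\
   (A *m (diag_mx sa *m diag_mx sa) *m A^T + B *m (diag_mx sb *m diag_mx sb) *m B^T)
     *m col i A = lam *: col i A.
Proof.
move=> AA BB pa pb H i.
have hA := eig_own sa i AA.
case: (classic (exists k, col i A = col k B)) => [[j Hj]|nB].
  exists (sa 0 i ^+ 2 + sb 0 j ^+ 2); split.
    by rewrite addr_gt0 // exprn_gt0.
  have hB : B *m (diag_mx sb *m diag_mx sb) *m B^T *m col i A = (sb 0 j ^+ 2) *: col i A.
    by rewrite Hj eig_own.
  by rewrite mulmxDl hA hB scalerDl.
exists (sa 0 i ^+ 2); split; first by rewrite exprn_gt0.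
have hB0 : B^T *m col i A = 0.
  apply/row_matrixP => p; rewrite row_mul row0 -tr_col.
  case: (classic (exists k, col p B = col k A)) => [[k Hk]|nA].
    have ne : k != i.
      by apply/eqP => eki; apply: nB; exists p; rewrite Hk eki.
    rewrite Hk tr_col -row_mul col_norm //.
    by apply/matrixP => x y; rewrite !mxE (negbTE ne).
  by move/(congr1 trmx): (H i p nB nA); rewrite trmx_mul trmxK trmx0.
by rewrite mulmxDl hA -mulmxA hB0 mulmx0 addr0.
Qed.

Unset Implicit Arguments.
Theorem mainTheorem4 (R : realType) (m n1 n2 r1 r2 r : nat)
  (X1 : 'M[R]_(m, n1)) (X2 : 'M[R]_(m, n2))
  (U1 : 'M[R]_(m, r1)) (s1 : 'rV[R]_r1) (V1 : 'M[R]_(n1, r1))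
  (U2 : 'M[R]_(m, r2)) (s2 : 'rV[R]_r2) (V2 : 'M[R]_(n2, r2))
  (U : 'M[R]_(m, r)) (s : 'rV[R]_r) (V : 'M[R]_(n1 + n2, r)) :
  is_compact_svd X1 U1 s1 V1 ->
  is_compact_svd X2 U2 s2 V2 ->
  is_compact_svd (row_mx X1 X2) U s V ->
  distinct_sv s1 -> distinct_sv s2 -> distinct_sv s ->
  (forall (i : 'I_r1) (j : 'I_r2),
      ~ is_column_of (col i U1) U2 ->
      ~ is_column_of (col j U2) U1 ->
      (col i U1)^T *m col j U2 = 0) ->
  (forall i : 'I_r1, is_column_of_up_to_sign (col i U1) U) /\
  (forall j : 'I_r2, is_column_of_up_to_sign (col j U2) U).
Proof.
move=> [UU1 VV1 p1 _ E1] [UU2 VV2 p2 _ E2] [UU VV p _ E] _ _ inj H.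
have EM : U *m (diag_mx s *m diag_mx s) *m U^T =
   U1 *m (diag_mx s1 *m diag_mx s1) *m U1^T + U2 *m (diag_mx s2 *m diag_mx s2) *m U2^T.
  by rewrite -(XXt E VV) tr_row_mx mul_row_col (XXt E1 VV1) (XXt E2 VV2).
split=> i.
  have [lam [l0 Hl]] := @side R m r1 r2 U1 s1 U2 s2 UU1 UU2 p1 p2 H i.
  apply: (@key R m r U s (col i U1) lam UU p inj (col_unit i UU1) l0).
  exact: (etrans (congr1 (fun M => M *m col i U1) EM) Hl).
have H' : forall (j : 'I_r2) (i : 'I_r1),
    ~ (exists k, col j U2 = col k U1) -> ~ (exists k, col i U1 = col k U2) ->
    (col j U2)^T *m col i U1 = 0.
  move=> j i' nA nB.
  by move/(congr1 trmx): (H i' j nB nA); rewrite trmx_mul trmxK trmx0.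
have [lam [l0 Hl]] := @side R m r2 r1 U2 s2 U1 s1 UU2 UU1 p2 p1 H' i.
apply: (@key R m r U s (col i U2) lam UU p inj (col_unit i UU2) l0).
exact: (etrans (congr1 (fun M => M *m col i U2) (etrans EM (addrC _ _))) Hl).
Qed.
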